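(* Let $d<\infty$, let $f$ be the embedding map of an analytic disc $V\subset\mathbb{B}_d$ attached to the unit sphere, and let $\mu(z)=\lambda\frac{\alpha-z}{1-\bar\alpha z}$ with $\lambda\in\mathbb{T}$, $\alpha\in\mathbb{D}$. Then for all $\xi\in\mathbb{T}$, $$A_{f\circ\mu}(\xi)=A_f(\mu(\xi))\,\frac{1-|\alpha|^2}{|\alpha-\xi|^2}.$$
   Context: $\mathbb{D}$ is the open unit disc, $\mathbb{T}$ the unit circle, $\mathbb{B}_d$ the open unit ball of $\mathbb{C}^d$. The Drury–Arveson space $H^2_d$ is the RKHS on $\mathbb{B}_d$ with kernel $1/(1-\langle z,w\rangle)$, with multiplier algebra $\mathcal{M}_d$; a variety is a common zero set of a family of functions in $\mathcal{M}_d$. An analytic disc attached to the unit sphere is a variety $V\subset\mathbb{B}_d$ for which there is an injective analytic $f:\mathbb{D}\to\mathbb{B}_d$ with $f'\neq0$ on $\mathbb{D}$, $V=f(\mathbb{D})$, $f$ extends to a $C^2$ map on $\overline{\mathbb{D}}$, and for $x\in\overline{\mathbb{D}}$, $\|f(x)\|=1$ iff $|x|=1$ ($f$ is an embedding map). For a $C^1$ map $h$ on $\overline{\mathbb{D}}$, $A_h(\xi)=\langle h(\xi),h'(\xi)\xi\rangle$ for $\xi\in\mathbb{T}$. *)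

(* Defs.v *)
From Stdlib Require Import Reals Lra.
From Coquelicot Require Import Coquelicot.
Open Scope R_scope.

(** Points of C^d are represented by their coordinate functions nat -> C;
    only the coordinates k < d are relevant. *)

Fixpoint csum (n : nat) (g : nat -> C) : C :=
  match n with
  | O => 0%C
  | S m => (csum m g + g m)%C
  end.

Definition cinner (d : nat) (z w : nat -> C) : C :=
  csum d (fun k => (z k * Cconj (w k))%C).

Fixpoint rsum (n : nat) (g : nat -> R) : R :=
  match n with
  | O => 0
  | S m => rsum m g + g m
  end.

Definition vnorm2 (d : nat) (z : nat -> C) : R :=
  rsum d (fun k => (Cmod (z k))^2).

Definition cderiv (h : C -> C) (z l : C) : Prop :=
  is_derive (K := C_AbsRing) (V := C_NormedModule) h z l.

(** For a map that is C^1 on the closed disc and holomorphic inside this is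
    the value at boundary points of the (continuous extension of the)
    complex derivative h'. *)
Definition cderiv_cl (h : C -> C) (z l : C) : Prop :=
  forall eps : R, 0 < eps -> exists delta : R, 0 < delta /\
    forall w : C, Cmod w <= 1 -> w <> z -> Cmod (w - z) < delta ->
      Cmod ((h w - h z) / (w - z) - l)%C < eps.

Definition C1_with (u ux uy : C -> R) : Prop :=
  (forall p : C, is_derive (fun t => u (t, snd p)) (fst p) (ux p) /\
                 is_derive (fun t => u (fst p, t)) (snd p) (uy p)) /\
  (forall p : C, continuous ux p /\ continuous uy p).

Definition C1_real (u : C -> R) : Prop := exists ux uy, C1_with u ux uy.

Definition C2_real (u : C -> R) : Prop :=
  exists ux uy, C1_with u ux uy /\ C1_real ux /\ C1_real uy.

Definition C2_map (h : C -> C) : Prop :=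
  C2_real (fun p => Re (h p)) /\ C2_real (fun p => Im (h p)).

(** f : D -> B_d is an embedding map of an analytic disc attached to the
    unit sphere (without the condition that f(D) be a variety). *)
Definition embedding_map (d : nat) (f : nat -> C -> C) : Prop :=
  (forall k z, (k < d)%nat -> Cmod z < 1 -> exists l, cderiv (f k) z l) /\
  (forall z, Cmod z < 1 -> ~ (forall k, (k < d)%nat -> cderiv (f k) z 0%C)) /\
  (forall x y, Cmod x < 1 -> Cmod y < 1 ->
     (forall k, (k < d)%nat -> f k x = f k y) -> x = y) /\
  (forall x, Cmod x < 1 -> vnorm2 d (fun k => f k x) < 1) /\
  (exists F : nat -> C -> C,
     (forall k x, (k < d)%nat -> Cmod x <= 1 -> F k x = f k x) /\
     (forall k, (k < d)%nat -> C2_map (F k))) /\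
  (forall x, Cmod x <= 1 -> (vnorm2 d (fun k => f k x) = 1 <-> Cmod x = 1)).

(** A_h(xi) = < h(xi), h'(xi) xi >, given the values hv = h(xi) and the
    derivative vector dh = h'(xi). *)
Definition Aval (d : nat) (hv dh : nat -> C) (xi : C) : C :=
  cinner d hv (fun k => (dh k * xi)%C).

Definition mob (lam alpha : C) (z : C) : C :=
  (lam * ((alpha - z) / (1 - Cconj alpha * z)))%C.

(* Main.v *)
Require Import Defs.
From Stdlib Require Import Reals Lra Psatz Lia IndefiniteDescription.
From Coquelicot Require Import Coquelicot.
Open Scope R_scope.

Lemma Cmod_sq_le (x y : C) : Cmod x ^ 2 <= Cmod y ^ 2 -> Cmod x <= Cmod y.
Proof. intros H. pose proof (Cmod_ge_0 x). pose proof (Cmod_ge_0 y). nra. Qed.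

Lemma Re_le_Cmod (c : C) : Rabs (Re c) <= Cmod c.
Proof.
  rewrite <- Cmod_R. apply Cmod_sq_le. rewrite !Cmod2_alt. unfold Re, Im, RtoC; cbn [fst snd]. nra.
Qed.

Lemma Im_le_Cmod (c : C) : Rabs (Im c) <= Cmod c.
Proof.
  rewrite <- Cmod_R. apply Cmod_sq_le. rewrite !Cmod2_alt. unfold Re, Im, RtoC; cbn [fst snd]. nra.
Qed.

Lemma Cmod_le_ReIm (c : C) : Cmod c <= Rabs (Re c) + Rabs (Im c).
Proof.
  apply Rsqr_incr_0_var. 2: pose proof (Rabs_pos (Re c)); pose proof (Rabs_pos (Im c)); lra.
  unfold Rsqr.
  assert (Cmod c * Cmod c = Cmod c ^ 2) as -> by ring. rewrite Cmod2_alt.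
  rewrite <- (pow2_abs (Re c)), <- (pow2_abs (Im c)).
  pose proof (Rabs_pos (Re c)); pose proof (Rabs_pos (Im c)). nra.
Qed.

Lemma Cmod_mono (a b a' b' : R) : Rabs a <= Rabs a' -> Rabs b <= Rabs b' ->
  Cmod (a, b) <= Cmod (a', b').
Proof.
  intros H1 H2. apply Cmod_sq_le. rewrite !Cmod2_alt. unfold Re, Im, RtoC; cbn [fst snd].
  rewrite <- (pow2_abs a), <- (pow2_abs b), <- (pow2_abs a'), <- (pow2_abs b').
  pose proof (Rabs_pos a); pose proof (Rabs_pos b). nra.
Qed.

Lemma Cmod_ReIm_le (c : C) : Rabs (Re c) + Rabs (Im c) <= 2 * Cmod c.
Proof. pose proof (Re_le_Cmod c); pose proof (Im_le_Cmod c). lra. Qed.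

Definition cdiff (h : C -> C) (z l : C) : Prop :=
  forall eps, 0 < eps -> exists delta, 0 < delta /\
    forall w, Cmod (w - z) < delta ->
      Cmod (h w - h z - l * (w - z))%C <= eps * Cmod (w - z).

Lemma cderiv_cdiff h z l : cderiv h z l -> cdiff h z l.
Proof.
  intros [_ H] eps Heps.
  specialize (H z (fun P HP => HP) (mkposreal eps Heps)).
  destruct H as [[del Hdel] Hd].
  exists del. split. exact Hdel.
  intros w Hw. specialize (Hd w). simpl in Hd.
  assert (@ball (AbsRing_UniformSpace C_AbsRing) z del w) as Hb.
  { exact Hw. }
  specialize (Hd Hb).
  change (Cmod (h w - h z - (w - z) * l)%C <= eps * Cmod (w - z)) in Hd.
  replace (l * (w - z))%C with ((w - z) * l)%C by ring. exact Hd.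
Qed.

Lemma cont_eps (g : C -> R) p : continuous g p ->
  forall eps, 0 < eps -> exists delta, 0 < delta /\
    forall q, Cmod (q - p) < delta -> Rabs (g q - g p) < eps.
Proof.
  intros H eps Heps.
  apply filterlim_locally with (eps := mkposreal eps Heps) in H.
  destruct H as [[del Hdel] Hd].
  exists del. split. exact Hdel.
  intros q Hq. apply Hd. simpl.
  pose proof (Re_le_Cmod (q - p)). pose proof (Im_le_Cmod (q - p)).
  split; [change (Rabs (Re (q - p)%C) < del)|change (Rabs (Im (q - p)%C) < del)]; lra.
Qed.
Lemma Cminus_pair a b c d : (((a, b) : C) - (c, d))%C = ((a - c, b - d) : C).
Proof. reflexivity. Qed.

Lemma mvt_bound (a b : R) (c : R) : Rmin a b <= c <= Rmax a b -> Rabs (c - a) <= Rabs (b - a).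
Proof.
  intros [H1 H2]. unfold Rmin, Rmax in *. destruct (Rle_dec a b);
  unfold Rabs; repeat destruct Rcase_abs; lra.
Qed.

Lemma frechet u ux uy : C1_with u ux uy -> forall p eps, 0 < eps ->
  exists delta, 0 < delta /\ forall q, Cmod (q - p) < delta ->
   Rabs (u q - u p - ux p * (fst q - fst p) - uy p * (snd q - snd p))
     <= eps * (Rabs (fst q - fst p) + Rabs (snd q - snd p)).
Proof.
  intros [Hd Hc] p eps Heps.
  destruct (Hc p) as [cx cy].
  destruct (cont_eps ux p cx eps Heps) as [d1 [Hd1 H1]].
  destruct (cont_eps uy p cy eps Heps) as [d2 [Hd2 H2]].
  exists (Rmin d1 d2). split. apply Rmin_pos; auto.
  intros [x y] Hq. destruct p as [x0 y0]. simpl fst; simpl snd.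
  destruct (MVT_gen (fun t => u (t, y)) x0 x (fun t => ux (t, y))) as [c1 [Hc1 E1]].
  { intros t _. exact (proj1 (Hd (t, y))). }
  { intros t _. apply derivable_continuous_pt. exists (ux (t, y)).
    apply is_derive_Reals. exact (proj1 (Hd (t, y))). }
  destruct (MVT_gen (fun t => u (x0, t)) y0 y (fun t => uy (x0, t))) as [c2 [Hc2 E2]].
  { intros t _. exact (proj2 (Hd (x0, t))). }
  { intros t _. apply derivable_continuous_pt. exists (uy (x0, t)).
    apply is_derive_Reals. exact (proj2 (Hd (x0, t))). }
  simpl in E1, E2.
  pose proof (mvt_bound _ _ _ Hc1) as B1. pose proof (mvt_bound _ _ _ Hc2) as B2.
  rewrite Cminus_pair in Hq.
  assert (Cmod ((c1, y) - (x0, y0))%C < d1) as Q1.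
  { rewrite Cminus_pair. eapply Rle_lt_trans. apply Cmod_mono. exact B1. apply Rle_refl.
    eapply Rlt_le_trans. exact Hq. apply Rmin_l. }
  assert (Cmod ((x0, c2) - (x0, y0))%C < d2) as Q2.
  { rewrite Cminus_pair. eapply Rle_lt_trans. apply Cmod_mono.
    2: exact B2. rewrite Rminus_diag, Rabs_R0. apply Rabs_pos.
    eapply Rlt_le_trans. exact Hq. apply Rmin_r. }
  specialize (H1 _ Q1). specialize (H2 _ Q2).
  replace (u (x, y) - u (x0, y0) - ux (x0, y0) * (x - x0) - uy (x0, y0) * (y - y0))
    with ((ux (c1, y) - ux (x0, y0)) * (x - x0) + (uy (x0, c2) - uy (x0, y0)) * (y - y0)) by lra.
  eapply Rle_trans. apply Rabs_triang. rewrite !Rabs_mult.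
  pose proof (Rabs_pos (x - x0)). pose proof (Rabs_pos (y - y0)). nra.
Qed.
Lemma dir_deriv (F f : C -> C) z l (e : C) (P : C -> R) (gam : R -> C) t0 r :
  0 < r -> (forall w, Cmod (w - z) < r -> F w = f w) -> cdiff f z l ->
  Cmod e = 1 -> (forall t, gam t = (z + RtoC (t - t0) * e)%C) ->
  (forall a b c, P (a - b - c)%C = P a - P b - P c) ->
  (forall s c, P (RtoC s * c)%C = s * P c) ->
  (forall c, Rabs (P c) <= Cmod c) ->
  derivable_pt_lim (fun t => P (F (gam t))) t0 (P (l * e)%C).
Proof.
  intros Hr HF Hd He Hg Psub Pscal Pabs eps Heps.
  destruct (Hd (eps / 2)) as [del [Hdel Hw]]. lra.
  assert (0 < Rmin del r) as Hm by (apply Rmin_pos; lra).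
  exists (mkposreal _ Hm). intros h hnz hlt. simpl in hlt.
  rewrite !Hg. replace (t0 + h - t0) with h by ring. replace (t0 - t0) with 0 by ring.
  rewrite Cmult_0_l, Cplus_0_r.
  set (w := (z + RtoC h * e)%C).
  assert (Cmod (w - z) = Rabs h) as Ew.
  { unfold w. replace (z + RtoC h * e - z)%C with (RtoC h * e)%C by ring.
    rewrite Cmod_mult, He, Cmod_R. ring. }
  rewrite HF. 2: rewrite Ew; eapply Rlt_le_trans; [exact hlt| apply Rmin_r].
  rewrite HF. 2: replace (z - z)%C with (RtoC 0) by ring; rewrite Cmod_R, Rabs_R0; lra.
  specialize (Hw w). rewrite Ew in Hw.
  assert (Rabs h < del) as hd by (eapply Rlt_le_trans; [exact hlt| apply Rmin_l]).
  specialize (Hw hd).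
  assert (P (f w) - P (f z) = P (f w - f z - l * (w - z))%C + h * P (l * e)%C) as EP.
  { replace (l * (w - z))%C with (RtoC h * (l * e))%C.
    rewrite Psub, Pscal. ring. unfold w. ring. }
  rewrite EP.
  replace ((P (f w - f z - l * (w - z))%C + h * P (l * e)%C) / h - P (l * e)%C)
    with (P (f w - f z - l * (w - z))%C / h) by (field; exact hnz).
  unfold Rdiv. rewrite Rabs_mult, Rabs_inv.
  assert (0 < Rabs h) by (apply Rabs_pos_lt; exact hnz).
  apply Rmult_lt_reg_r with (Rabs h). lra.
  rewrite Rmult_assoc, Rinv_l by lra. 
  pose proof (Pabs (f w - f z - l * (w - z))%C). nra.
Qed.
Lemma Re_sub3 a b c : Re (a - b - c)%C = Re a - Re b - Re c.
Proof. destruct a, b, c; unfold Re; simpl; ring. Qed.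
Lemma Im_sub3 a b c : Im (a - b - c)%C = Im a - Im b - Im c.
Proof. destruct a, b, c; unfold Im; simpl; ring. Qed.

Lemma CR_interior (F f : C -> C) ux uy vx vy z l :
  C1_with (fun p => Re (F p)) ux uy -> C1_with (fun p => Im (F p)) vx vy ->
  (forall w, Cmod w <= 1 -> F w = f w) -> Cmod z < 1 -> cdiff f z l ->
  ux z = Re l /\ uy z = - Im l /\ vx z = Im l /\ vy z = Re l.
Proof.
  intros [Hu _] [Hv _] HF Hz Hd.
  assert (HF' : forall w, Cmod (w - z) < 1 - Cmod z -> F w = f w).
  { intros w Hw. apply HF. replace w with (z + (w - z))%C by ring.
    pose proof (Cmod_triangle z (w - z)). lra. }
  assert (Hr : 0 < 1 - Cmod z) by lra.
  destruct (Hu z) as [Hux Huy]. destruct (Hv z) as [Hvx Hvy].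
  apply is_derive_Reals in Hux, Huy, Hvx, Hvy.
  destruct z as [x0 y0]. simpl in Hux, Huy, Hvx, Hvy.
  assert (G1 : forall t, ((t, y0) : C) = ((x0, y0) + RtoC (t - x0) * RtoC 1)%C).
  { intros t. apply injective_projections; simpl; ring. }
  assert (G2 : forall t, ((x0, t) : C) = ((x0, y0) + RtoC (t - y0) * Ci)%C).
  { intros t. apply injective_projections; simpl; ring. }
  assert (R1 : Re (l * RtoC 1)%C = Re l) by (rewrite Cmult_1_r; reflexivity).
  assert (I1 : Im (l * RtoC 1)%C = Im l) by (rewrite Cmult_1_r; reflexivity).
  assert (R2 : Re (l * Ci)%C = - Im l) by (destruct l; unfold Re, Im, Ci; simpl; ring).
  assert (I2 : Im (l * Ci)%C = Re l) by (destruct l; unfold Re, Im, Ci; simpl; ring).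
  split; [|split; [|split]].
  - rewrite <- R1. eapply uniqueness_limite. exact Hux.
    apply (dir_deriv F f (x0, y0) l (RtoC 1) Re (fun t => (t, y0)) x0 _ Hr HF' Hd Cmod_1 G1 Re_sub3 re_scal_l Re_le_Cmod).
  - rewrite <- R2. eapply uniqueness_limite. exact Huy.
    apply (dir_deriv F f (x0, y0) l Ci Re (fun t => (x0, t)) y0 _ Hr HF' Hd Cmod_Ci G2 Re_sub3 re_scal_l Re_le_Cmod).
  - rewrite <- I1. eapply uniqueness_limite. exact Hvx.
    apply (dir_deriv F f (x0, y0) l (RtoC 1) Im (fun t => (t, y0)) x0 _ Hr HF' Hd Cmod_1 G1 Im_sub3 im_scal_l Im_le_Cmod).
  - rewrite <- I2. eapply uniqueness_limite. exact Hvy.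
    apply (dir_deriv F f (x0, y0) l Ci Im (fun t => (x0, t)) y0 _ Hr HF' Hd Cmod_Ci G2 Im_sub3 im_scal_l Im_le_Cmod).
Qed.
Lemma limit_eq (g h : C -> R) (c : R) p : continuous g p -> continuous h p ->
  Rabs c <= 1 -> Cmod p <= 1 -> (forall z, Cmod z < 1 -> g z = c * h z) -> g p = c * h p.
Proof.
  intros cg ch Hc Hp Heq.
  destruct (Req_dec (g p) (c * h p)) as [E|N]; [exact E|exfalso].
  set (e := Rabs (g p - c * h p) / 2).
  assert (He : 0 < e). { unfold e. assert (0 < Rabs (g p - c * h p)) by (apply Rabs_pos_lt; lra). lra. }
  destruct (cont_eps g p cg e He) as [d1 [Hd1 H1]].
  destruct (cont_eps h p ch e He) as [d2 [Hd2 H2]].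
  set (s := Rmin (Rmin d1 d2) 1 / 2).
  assert (Hs0 : 0 < s). { unfold s. assert (0 < Rmin (Rmin d1 d2) 1) by (repeat apply Rmin_pos; lra). lra. }
  assert (Hs1 : s < Rmin d1 d2). { unfold s. assert (Rmin (Rmin d1 d2) 1 <= Rmin d1 d2) by apply Rmin_l.
    assert (0 < Rmin (Rmin d1 d2) 1) by (repeat apply Rmin_pos; lra). lra. }
  assert (Hs2 : s < 1). { unfold s. assert (Rmin (Rmin d1 d2) 1 <= 1) by apply Rmin_r.
    assert (0 < Rmin (Rmin d1 d2) 1) by (repeat apply Rmin_pos; lra). lra. }
  set (q := (RtoC (1 - s) * p)%C).
  assert (Hq : Cmod (q - p) < Rmin d1 d2).
  { unfold q. replace (RtoC (1 - s) * p - p)%C with (RtoC (- s) * p)%C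
      by (rewrite RtoC_minus, RtoC_opp; ring).
    rewrite Cmod_mult, Cmod_R, Rabs_Ropp, Rabs_pos_eq by lra.
    pose proof (Cmod_ge_0 p). nra. }
  assert (Hq1 : Cmod q < 1).
  { unfold q. rewrite Cmod_mult, Cmod_R, Rabs_pos_eq by lra. pose proof (Cmod_ge_0 p). nra. }
  specialize (H1 q (Rlt_le_trans _ _ _ Hq (Rmin_l _ _))).
  specialize (H2 q (Rlt_le_trans _ _ _ Hq (Rmin_r _ _))).
  rewrite (Heq q Hq1) in H1.
  assert (Rabs (c * h q - c * h p) < e).
  { rewrite <- Rmult_minus_distr_l, Rabs_mult. pose proof (Rabs_pos c). pose proof (Rabs_pos (h q - h p)). nra. }
  assert (Rabs (g p - c * h p) <= Rabs (c * h q - g p) + Rabs (c * h q - c * h p)).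
  { replace (g p - c * h p) with (- (c * h q - g p) + (c * h q - c * h p)) by ring.
    eapply Rle_trans. apply Rabs_triang. rewrite Rabs_Ropp. lra. }
  unfold e in *. lra.
Qed.
Lemma Re_N (A B w p : C) (a b : R) :
  Re (A - B - (a, b) * (w - p))%C = fst A - fst B - (a * (fst w - fst p) - b * (snd w - snd p)).
Proof. destruct A, B, w, p; unfold Re; simpl; ring. Qed.
Lemma Im_N (A B w p : C) (a b : R) :
  Im (A - B - (a, b) * (w - p))%C = snd A - snd B - (b * (fst w - fst p) + a * (snd w - snd p)).
Proof. destruct A, B, w, p; unfold Im; simpl; ring. Qed.
Lemma fst_sub (w p : C) : fst w - fst p = Re (w - p)%C.
Proof. destruct w, p; reflexivity. Qed.
Lemma snd_sub (w p : C) : snd w - snd p = Im (w - p)%C.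
Proof. destruct w, p; reflexivity. Qed.

Lemma closed_deriv (F f : C -> C) ux uy vx vy p :
  C1_with (fun p => Re (F p)) ux uy -> C1_with (fun p => Im (F p)) vx vy ->
  (forall w, Cmod w <= 1 -> F w = f w) ->
  (forall z, Cmod z < 1 -> exists l, cdiff f z l) -> Cmod p <= 1 ->
  cderiv_cl f p (ux p, vx p).
Proof.
  intros Hu Hv HF Hl Hp.
  assert (CR1 : ux p = 1 * vy p).
  { pose proof Hu as [_ Hcu]. pose proof Hv as [_ Hcv].
    apply limit_eq. apply (Hcu p). apply (Hcv p). rewrite Rabs_R1; lra. exact Hp.
    intros z Hz. destruct (Hl z Hz) as [l Hd].
    destruct (CR_interior F f ux uy vx vy z l Hu Hv HF Hz Hd) as [A [B [C' D]]]. lra. }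
  assert (CR2 : uy p = -1 * vx p).
  { pose proof Hu as [_ Hcu]. pose proof Hv as [_ Hcv].
    apply limit_eq. apply (Hcu p). apply (Hcv p). unfold Rabs; destruct Rcase_abs; lra. exact Hp.
    intros z Hz. destruct (Hl z Hz) as [l Hd].
    destruct (CR_interior F f ux uy vx vy z l Hu Hv HF Hz Hd) as [A [B [C' D]]]. lra. }
  intros eps Heps.
  destruct (frechet _ _ _ Hu p (eps / 8)) as [d1 [Hd1 H1]]. lra.
  destruct (frechet _ _ _ Hv p (eps / 8)) as [d2 [Hd2 H2]]. lra.
  exists (Rmin d1 d2). split. apply Rmin_pos; lra.
  intros w Hw Hne Hwp.
  specialize (H1 w (Rlt_le_trans _ _ _ Hwp (Rmin_l _ _))).
  specialize (H2 w (Rlt_le_trans _ _ _ Hwp (Rmin_r _ _))).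
  rewrite <- !HF by lra.
  assert (Hnz : (w - p)%C <> 0) by (intro E; apply Hne; apply Ceq_minus in E; auto).
  assert (Hpos : 0 < Cmod (w - p)) by (apply Cmod_gt_0; exact Hnz).
  replace ((F w - F p) / (w - p) - (ux p, vx p))%C
    with ((F w - F p - (ux p, vx p) * (w - p)) / (w - p))%C by (field; exact Hnz).
  rewrite Cmod_div by exact Hnz.
  set (N := (F w - F p - (ux p, vx p) * (w - p))%C).
  assert (Cmod N <= eps / 2 * Cmod (w - p)).
  { eapply Rle_trans. apply Cmod_le_ReIm.
    unfold N. rewrite Re_N, Im_N.
    rewrite !fst_sub, !snd_sub in *.
    pose proof (Cmod_ReIm_le (w - p)).
    replace (Re (F w - F p) - (ux p * Re (w - p) - vx p * Im (w - p)))
      with (Re (F w - F p) - ux p * Re (w - p) - uy p * Im (w - p)) by (rewrite CR2; ring).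
    replace (Im (F w - F p) - (vx p * Re (w - p) + ux p * Im (w - p)))
      with (Im (F w - F p) - vx p * Re (w - p) - vy p * Im (w - p)) by (rewrite CR1; ring).
    assert (eps / 8 * (Rabs (Re (w - p)) + Rabs (Im (w - p))) <= eps / 4 * Cmod (w - p)) by nra.
    lra. }
  apply Rmult_lt_reg_r with (Cmod (w - p)). exact Hpos.
  unfold Rdiv. rewrite Rmult_assoc, Rinv_l by lra. nra.
Qed.
Section Mob.
Variables lam a : C.
Hypothesis Hlam : Cmod lam = 1.
Hypothesis Ha : Cmod a < 1.

Lemma den_bound w : Cmod w <= 1 -> 1 - Cmod a <= Cmod (1 - Cconj a * w)%C.
Proof.
  intros Hw. pose proof (Cmod_triangle (1 - Cconj a * w) (Cconj a * w)).
  replace (1 - Cconj a * w + Cconj a * w)%C with (RtoC 1) in H by ring.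
  rewrite Cmod_1, Cmod_mult, Cmod_conj in H. pose proof (Cmod_ge_0 a). pose proof (Cmod_ge_0 w). nra.
Qed.

Lemma den_nz w : Cmod w <= 1 -> (1 - Cconj a * w)%C <> 0.
Proof. intros Hw E. pose proof (den_bound w Hw). rewrite E, Cmod_0 in H. lra. Qed.

Definition qf (w xi : C) : C := (lam * (a * Cconj a - 1) / ((1 - Cconj a * w) * (1 - Cconj a * xi)))%C.

Lemma mob_diff w xi : Cmod w <= 1 -> Cmod xi <= 1 ->
  (mob lam a w - mob lam a xi = qf w xi * (w - xi))%C.
Proof.
  intros Hw Hx. pose proof (den_nz w Hw). pose proof (den_nz xi Hx).
  unfold mob, qf. field. split; auto.
Qed.

Lemma disc_id w : Cmod (1 - Cconj a * w)%C ^ 2 - Cmod (a - w)%C ^ 2 = (1 - Cmod a ^ 2) * (1 - Cmod w ^ 2).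
Proof.
  rewrite !Cmod2_alt. destruct a as [a1 a2], w as [w1 w2]. unfold Re, Im; simpl. ring.
Qed.

Lemma mob_in w : Cmod w <= 1 -> Cmod (mob lam a w) <= 1.
Proof.
  intros Hw. pose proof (den_nz w Hw) as Hn. unfold mob.
  rewrite Cmod_mult, Hlam, Rmult_1_l, Cmod_div by exact Hn.
  pose proof (den_bound w Hw).
  assert (Cmod (a - w)%C <= Cmod (1 - Cconj a * w)%C).
  { apply Cmod_sq_le. pose proof (disc_id w). pose proof (Cmod_ge_0 a). pose proof (Cmod_ge_0 w).
    assert (0 <= (1 - Cmod a ^ 2) * (1 - Cmod w ^ 2)). { apply Rmult_le_pos; nra. } lra. }
  apply Rmult_le_reg_r with (Cmod (1 - Cconj a * w)%C). lra.
  unfold Rdiv. rewrite Rmult_assoc, Rinv_l by lra. lra.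
Qed.

Lemma aab : (a * Cconj a)%C = RtoC (Cmod a ^ 2).
Proof. rewrite Cmod2_conj. reflexivity. Qed.

Lemma num_nz : (lam * (a * Cconj a - 1))%C <> 0.
Proof.
  apply Cmult_neq_0. intro E. rewrite E, Cmod_0 in Hlam. lra.
  rewrite aab. rewrite <- RtoC_minus. intro E. apply RtoC_inj in E.
  pose proof (Cmod_ge_0 a). nra.
Qed.

Lemma num_bound : Cmod (lam * (a * Cconj a - 1))%C <= 2.
Proof.
  rewrite Cmod_mult, Hlam, Rmult_1_l. rewrite aab, <- RtoC_minus, Cmod_R.
  pose proof (Cmod_ge_0 a). unfold Rabs; destruct Rcase_abs; nra.
Qed.

Lemma qf_nz w xi : Cmod w <= 1 -> Cmod xi <= 1 -> qf w xi <> 0.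
Proof.
  intros Hw Hx E. unfold qf in E. pose proof (den_nz w Hw). pose proof (den_nz xi Hx).
  apply num_nz. replace (lam * (a * Cconj a - 1))%C with
   (lam * (a * Cconj a - 1) / ((1 - Cconj a * w) * (1 - Cconj a * xi)) * ((1 - Cconj a * w) * (1 - Cconj a * xi)))%C
   by (field; auto). rewrite E. ring.
Qed.

Lemma div_le x y X Y : 0 <= x -> x <= X -> 0 < Y -> Y <= y -> x / y <= X / Y.
Proof.
  intros. unfold Rdiv. apply Rmult_le_compat; auto.
  left; apply Rinv_0_lt_compat; lra. apply Rinv_le_contravar; lra.
Qed.

Lemma qf_bound w xi : Cmod w <= 1 -> Cmod xi <= 1 -> Cmod (qf w xi) <= 2 / (1 - Cmod a) ^ 2.
Proof.
  intros Hw Hx. pose proof (den_nz w Hw). pose proof (den_nz xi Hx).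
  unfold qf. rewrite Cmod_div by (apply Cmult_neq_0; auto). rewrite (Cmod_mult (1 - _ * w)).
  pose proof (den_bound w Hw). pose proof (den_bound xi Hx).
  apply div_le. apply Cmod_ge_0. apply num_bound.
  assert (0 < 1 - Cmod a) by lra. nra.
  simpl. rewrite Rmult_1_r. apply Rmult_le_compat; lra.
Qed.

Lemma qf_cont w xi : Cmod w <= 1 -> Cmod xi <= 1 ->
  Cmod (qf w xi - qf xi xi)%C <= 2 / (1 - Cmod a) ^ 3 * Cmod (w - xi)%C.
Proof.
  intros Hw Hx. pose proof (den_nz w Hw). pose proof (den_nz xi Hx).
  replace (qf w xi - qf xi xi)%C with
    (lam * (a * Cconj a - 1) * (Cconj a * (w - xi)) / ((1 - Cconj a * w) * (1 - Cconj a * xi) * (1 - Cconj a * xi)))%C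
    by (unfold qf; field; auto).
  pose proof (den_bound w Hw). pose proof (den_bound xi Hx).
  pose proof num_bound. pose proof (Cmod_ge_0 a). pose proof (Cmod_ge_0 (w - xi)%C).
  pose proof (Cmod_ge_0 (lam * (a * Cconj a - 1))%C).
  assert (0 < 1 - Cmod a) by lra.
  set (N := (lam * (a * Cconj a - 1))%C) in *.
  set (D1 := (1 - Cconj a * w)%C) in *. set (D2 := (1 - Cconj a * xi)%C) in *.
  rewrite Cmod_div by (repeat apply Cmult_neq_0; auto). rewrite !Cmod_mult, Cmod_conj.
  apply Rle_trans with ((2 * Cmod (w - xi)%C) / (1 - Cmod a) ^ 3).
  apply div_le.
  - repeat apply Rmult_le_pos; auto; apply Cmod_ge_0.
  - assert (Cmod a * Cmod (w - xi)%C <= Cmod (w - xi)%C) by nra.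
    apply Rmult_le_compat; nra.
  - apply pow_lt; lra.
  - simpl. rewrite Rmult_1_r. assert (0 <= (1 - Cmod a) * (1 - Cmod a)) by nra.
    replace ((1 - Cmod a) * ((1 - Cmod a) * (1 - Cmod a))) with ((1 - Cmod a) * (1 - Cmod a) * (1 - Cmod a)) by ring.
    apply Rmult_le_compat. lra. lra. apply Rmult_le_compat; lra. lra.
  - right. field. lra.
Qed.
End Mob.
Lemma chain lam a h xi D : Cmod lam = 1 -> Cmod a < 1 -> Cmod xi <= 1 ->
  cderiv_cl h (mob lam a xi) D ->
  cderiv_cl (fun z => h (mob lam a z)) xi (D * qf lam a xi xi)%C.
Proof.
  intros Hlam Ha Hx Hd eps Heps.
  set (B := 2 / (1 - Cmod a) ^ 2). set (Cc := 2 / (1 - Cmod a) ^ 3).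
  assert (HB : 0 < B). { unfold B. apply Rdiv_lt_0_compat. lra. apply pow_lt; lra. }
  assert (HC : 0 < Cc). { unfold Cc. apply Rdiv_lt_0_compat. lra. apply pow_lt; lra. }
  destruct (Hd (eps / (2 * B))) as [d1 [Hd1 H1]].
  { apply Rdiv_lt_0_compat; lra. }
  pose proof (Cmod_ge_0 D) as HD.
  set (d2 := eps / (2 * (Cmod D + 1) * Cc)).
  assert (Hd2 : 0 < d2). { unfold d2. apply Rdiv_lt_0_compat. lra.
    apply Rmult_lt_0_compat; lra. }
  exists (Rmin (d1 / B) d2). split. apply Rmin_pos; auto. apply Rdiv_lt_0_compat; lra.
  intros w Hw Hne Hwx.
  assert (Hwx1 : Cmod (w - xi)%C < d1 / B) by (eapply Rlt_le_trans; [exact Hwx| apply Rmin_l]).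
  assert (Hwx2 : Cmod (w - xi)%C < d2) by (eapply Rlt_le_trans; [exact Hwx| apply Rmin_r]).
  assert (Hnz : (w - xi)%C <> 0) by (intro E; apply Hne; apply Ceq_minus in E; auto).
  pose proof (qf_nz lam a Hlam Ha w xi Hw Hx) as Hq.
  pose proof (mob_diff lam a Ha w xi Hw Hx) as Em.
  set (m := mob lam a w) in *. set (m0 := mob lam a xi) in *.
  set (qw := qf lam a w xi) in *. set (q0 := qf lam a xi xi) in *.
  assert (Hmnz : (m - m0)%C <> 0). { rewrite Em. apply Cmult_neq_0; auto. }
  assert (Hmne : m <> m0). { intro E. apply Hmnz. rewrite E. ring. }
  pose proof (qf_bound lam a Hlam Ha w xi Hw Hx) as Bq. fold B in Bq. fold qw in Bq.
  pose proof (qf_cont lam a Hlam Ha w xi Hw Hx) as Cq. fold Cc qw q0 in Cq.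
  assert (Hmm : Cmod (m - m0)%C < d1).
  { rewrite Em, Cmod_mult. pose proof (Cmod_ge_0 (w - xi)%C).
    apply Rle_lt_trans with (B * Cmod (w - xi)%C). apply Rmult_le_compat_r; auto.
    apply Rmult_lt_reg_r with (/ B). apply Rinv_0_lt_compat; lra.
    rewrite (Rmult_comm B), Rmult_assoc, Rinv_r, Rmult_1_r by lra. exact Hwx1. }
  specialize (H1 m (mob_in lam a Hlam Ha w Hw) Hmne Hmm).
  set (K := ((h m - h m0) / (m - m0))%C) in *.
  replace ((h m - h m0) / (w - xi) - D * q0)%C with ((K - D) * qw + D * (qw - q0))%C.
  2: { unfold K. rewrite Em. field. split; auto. }
  eapply Rle_lt_trans. apply Cmod_triangle. rewrite !Cmod_mult.
  assert (Cmod (K - D)%C * Cmod qw <= eps / 2).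
  { apply Rle_trans with (eps / (2 * B) * B). apply Rmult_le_compat; try apply Cmod_ge_0; lra.
    right. field. lra. }
  assert (Cmod D * Cmod (qw - q0)%C < eps / 2).
  { apply Rle_lt_trans with (Cmod D * (Cc * d2)).
    apply Rmult_le_compat_l; auto. eapply Rle_trans. exact Cq.
    apply Rmult_le_compat_l; lra.
    unfold d2. replace (Cmod D * (Cc * (eps / (2 * (Cmod D + 1) * Cc)))) with
       (eps / 2 * (Cmod D / (Cmod D + 1))) by (field; lra).
    assert (Cmod D / (Cmod D + 1) < 1).
    { apply Rmult_lt_reg_r with (Cmod D + 1). lra. unfold Rdiv.
      rewrite Rmult_assoc, Rinv_l by lra. lra. }
    nra. }
  lra.
Qed.

Lemma cl_unique h z L1 L2 : Cmod z = 1 -> cderiv_cl h z L1 -> cderiv_cl h z L2 -> L1 = L2.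
Proof.
  intros Hz H1 H2.
  destruct (Ceq_dec L1 L2) as [E|N]; [exact E|exfalso].
  assert (Hp : 0 < Cmod (L1 - L2)%C).
  { apply Cmod_gt_0. intro E. apply N. apply Ceq_minus. exact E. }
  set (e := Cmod (L1 - L2)%C / 2).
  destruct (H1 e) as [d1 [Hd1 K1]]. unfold e; lra.
  destruct (H2 e) as [d2 [Hd2 K2]]. unfold e; lra.
  set (t := Rmin (Rmin d1 d2) 1 / 2).
  assert (Ht0 : 0 < t). { unfold t. assert (0 < Rmin (Rmin d1 d2) 1) by (repeat apply Rmin_pos; lra). lra. }
  assert (Ht1 : t < Rmin d1 d2). { unfold t. assert (Rmin (Rmin d1 d2) 1 <= Rmin d1 d2) by apply Rmin_l.
    assert (0 < Rmin (Rmin d1 d2) 1) by (repeat apply Rmin_pos; lra). lra. }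
  assert (Ht2 : t < 1). { unfold t. assert (Rmin (Rmin d1 d2) 1 <= 1) by apply Rmin_r.
    assert (0 < Rmin (Rmin d1 d2) 1) by (repeat apply Rmin_pos; lra). lra. }
  set (w := (RtoC (1 - t) * z)%C).
  assert (Hw : Cmod w <= 1). { unfold w. rewrite Cmod_mult, Cmod_R, Rabs_pos_eq, Hz by lra. lra. }
  assert (Hwz : Cmod (w - z)%C = t).
  { unfold w. replace (RtoC (1 - t) * z - z)%C with (RtoC (- t) * z)%C
      by (rewrite RtoC_minus, RtoC_opp; ring).
    rewrite Cmod_mult, Cmod_R, Rabs_Ropp, Rabs_pos_eq, Hz by lra. ring. }
  assert (Hne : w <> z). { intro E. rewrite E in Hwz. replace (z - z)%C with (RtoC 0) in Hwz by ring.
    rewrite Cmod_0 in Hwz. lra. }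
  assert (Hs1 : Cmod (w - z)%C < d1) by (rewrite Hwz; eapply Rlt_le_trans; [exact Ht1|apply Rmin_l]).
  assert (Hs2 : Cmod (w - z)%C < d2) by (rewrite Hwz; eapply Rlt_le_trans; [exact Ht1|apply Rmin_r]).
  specialize (K1 w Hw Hne Hs1). specialize (K2 w Hw Hne Hs2).
  set (Q := ((h w - h z) / (w - z))%C) in *.
  pose proof (Cmod_triangle (- (Q - L1)) (Q - L2))%C.
  replace (- (Q - L1) + (Q - L2))%C with (L1 - L2)%C in H by ring.
  rewrite Cmod_opp in H. unfold e in *. lra.
Qed.
Lemma csum_ext n g h : (forall k, (k < n)%nat -> g k = h k) -> csum n g = csum n h.
Proof.
  induction n; intros H; simpl. reflexivity.
  rewrite IHn. rewrite H; auto. intros k Hk; apply H; auto.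
Qed.

Lemma csum_mulr n g c : csum n (fun k => g k * c)%C = (csum n g * c)%C.
Proof. induction n; simpl. ring. rewrite IHn. ring. Qed.

Lemma conj_RtoC r : Cconj (RtoC r) = RtoC r.
Proof. apply injective_projections; simpl; ring. Qed.

Lemma key_id lam a xi : Cmod a < 1 -> Cmod xi = 1 ->
  (qf lam a xi xi * xi)%C = (mob lam a xi * RtoC ((1 - Cmod a ^ 2) / Cmod (a - xi)%C ^ 2))%C.
Proof.
  intros Ha Hx.
  assert (Hxi : xi <> 0). { intro E. rewrite E, Cmod_0 in Hx. lra. }
  assert (Haxi : (a - xi)%C <> 0).
  { intro E. apply Ceq_minus in E. rewrite E in Ha. lra. }
  assert (Hden : Cmod (a - xi)%C ^ 2 <> 0).
  { apply pow_nonzero. intro E. apply Cmod_eq_0 in E. auto. }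
  assert (Hcx : Cconj xi = (/ xi)%C).
  { pose proof (Cmod2_conj xi) as E. rewrite Hx in E.
    replace (Cconj xi) with (xi * Cconj xi / xi)%C by (field; auto).
    rewrite <- E. rewrite pow1. field. exact Hxi. }
  assert (Hca : (Cconj a - / xi)%C <> 0).
  { intro E. apply Ceq_minus in E. assert (Cmod (Cconj a) = Cmod (/ xi)%C) by (rewrite E; auto).
    rewrite Cmod_conj, Cmod_inv, Hx in H by auto. rewrite Rinv_1 in H. lra. }
  assert (Hd1 : (1 - Cconj a * xi)%C <> 0).
  { apply den_nz; auto. lra. }
  rewrite RtoC_div by exact Hden. rewrite RtoC_minus.
  rewrite !Cmod2_conj. rewrite Cminus_conj, Hcx.
  replace (RtoC 1) with (RtoC (Cmod 1 ^ 2)) by (rewrite Cmod_1; f_equal; ring).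
  rewrite Cmod2_conj. 
  replace (Cconj 1) with (RtoC 1) by (apply injective_projections; simpl; ring).
  unfold qf, mob. field. repeat split; auto.
  intro E. apply Hd1. replace (1 - Cconj a * xi)%C with (- (Cconj a * xi - 1))%C by ring.
  rewrite E. ring.
Qed.
Lemma Df_exists d f xi : embedding_map d f -> Cmod xi <= 1 ->
  forall k, exists L, (k < d)%nat -> cderiv_cl (f k) xi L.
Proof.
  intros [Han [_ [_ [_ [[F [HFeq HF2]] _]]]]] Hx k.
  destruct (Nat.lt_ge_cases k d) as [Hk|Hk].
  2: { exists 0%C. intros; lia. }
  destruct (HF2 k Hk) as [[ux [uy [Hu _]]] [vx [vy [Hv _]]]].
  exists (ux xi, vx xi). intros _.
  apply (closed_deriv (F k) (f k) ux uy vx vy xi Hu Hv).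
  - intros w Hw. apply HFeq; auto.
  - intros z Hz. destruct (Han k z Hk Hz) as [l Hl]. exists l. apply cderiv_cdiff. exact Hl.
  - exact Hx.
Qed.

Theorem lemma2p6 (d : nat) (f : nat -> C -> C) (lam alpha : C) :
  embedding_map d f ->
  Cmod lam = 1 -> Cmod alpha < 1 ->
  forall xi : C, Cmod xi = 1 ->
    (* the boundary derivatives exist *)
    (exists Df : nat -> C,
        forall k, (k < d)%nat -> cderiv_cl (f k) (mob lam alpha xi) (Df k)) /\
    (exists Dg : nat -> C,
        forall k, (k < d)%nat -> cderiv_cl (fun z => f k (mob lam alpha z)) xi (Dg k)) /\
    (* and the identity A_{f o mu}(xi) = A_f(mu xi) (1-|alpha|^2)/|alpha-xi|^2 *)
    (forall Df Dg : nat -> C,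
        (forall k, (k < d)%nat -> cderiv_cl (f k) (mob lam alpha xi) (Df k)) ->
        (forall k, (k < d)%nat -> cderiv_cl (fun z => f k (mob lam alpha z)) xi (Dg k)) ->
        Aval d (fun k => f k (mob lam alpha xi)) Dg xi =
        (Aval d (fun k => f k (mob lam alpha xi)) Df (mob lam alpha xi) *
         RtoC ((1 - (Cmod alpha)^2) / (Cmod (alpha - xi))^2))%C).
Proof.
  intros He Hlam Ha xi Hx.
  assert (Hx1 : Cmod xi <= 1) by lra.
  assert (Hm : Cmod (mob lam alpha xi) <= 1) by (apply mob_in; auto).
  pose proof (Df_exists d f _ He Hm) as HD.
  set (Df0 := fun k => proj1_sig (constructive_indefinite_description _ (HD k))).
  assert (HDf0 : forall k, (k < d)%nat -> cderiv_cl (f k) (mob lam alpha xi) (Df0 k)).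
  { intros k Hk. unfold Df0. destruct (constructive_indefinite_description _ (HD k)) as [L HL].
    simpl. auto. }
  split; [|split].
  - exists Df0. exact HDf0.
  - exists (fun k => Df0 k * qf lam alpha xi xi)%C. intros k Hk.
    apply chain; auto.
  - intros Df Dg HDf HDg.
    assert (EDg : forall k, (k < d)%nat -> Dg k = (Df k * qf lam alpha xi xi)%C).
    { intros k Hk. eapply cl_unique. exact Hx. apply HDg; auto. apply chain; auto. }
    unfold Aval, cinner.
    rewrite (csum_ext d _ (fun k => (f k (mob lam alpha xi) * Cconj (Df k)) * Cconj (qf lam alpha xi xi * xi))%C).
    2: { intros k Hk. rewrite EDg by auto. rewrite !Cmult_conj. ring. }
    rewrite (csum_ext d (fun k => f k (mob lam alpha xi) * Cconj (Df k * mob lam alpha xi))%C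
       (fun k => (f k (mob lam alpha xi) * Cconj (Df k)) * Cconj (mob lam alpha xi))%C).
    2: { intros k Hk. rewrite !Cmult_conj. ring. }
    rewrite !csum_mulr. rewrite key_id by auto.
    rewrite Cmult_conj, conj_RtoC. ring.
Qed.
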